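(* For every planar rooted forest $\tau$ (decorated or not) with vertex set $V=V(\tau)$ and all $h,k\ge0$, $$(h+k)^{|\tau|}=\sum_{\substack{V'\sqcup V''=V\\ V''\ \text{down-set for }\ll}}\frac{\tau!}{(V',\ll|_{V'})!\,(V'',\ll|_{V''})!}\,h^{|V'|}k^{|V''|},$$ where the sum runs over all partitions of $V$ into $V'$ and $V''$ such that $V''$ is downward closed for $\ll$ (if $v\in V''$ and $w\ll v$ then $w\in V''$).
   Context: Planar rooted forests: finite left-to-right ordered sequences of planar rooted trees (children of each vertex linearly ordered left to right). On the vertex set, $v<w$ iff $v\ne w$ and $v$ lies on the path from a root to $w$; $\ll$ is the transitive closure of the relation $R$: $vRw$ iff $v<w$, or $v,w$ are children of a common vertex with $v$ to the right of $w$, or $v,w$ are both roots with $v$ to the right of $w$. For a finite poset $(P,\le)$ and $s<t$, $\Omega^{st}_P=\{(t_v)_{v\in P}\in[s,t]^P:\ t_v\ge t_w\text{ whenever }v<w\}$ and the poset factorial $P!$ is defined by $\mathrm{Vol}(\Omega^{st}_P)=(t-s)^{|P|}/P!$ (empty poset: $1$). The planar factorial is $\tau!:=(V(\tau),\ll)!$; $(W,\ll|_W)!$ is the factorial of the subset $W$ with the restricted order. *)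

(* Defs.v *)
From Stdlib Require Import Reals ClassicalEpsilon.
From mathcomp Require Import all_boot.

Set Implicit Arguments.
Unset Strict Implicit.
Unset Printing Implicit Defensive.

Definition Rleb (a b : R) : bool := if Rle_dec a b then true else false.

(* Membership of a point x : T -> R (only its coordinates on W matter) in
   Omega^{st}_{(W, lt|_W)} = { (t_v)_{v in W} in [s,t]^W :
                                 t_v >= t_w whenever v < w }. *)
Definition in_Omega (T : finType) (lt : rel T) (W : {set T}) (s t : R)
    (x : T -> R) : bool :=
  [forall v in W, Rleb s (x v) && Rleb (x v) t] &&
  [forall v in W, forall w in W, lt v w ==> Rleb (x w) (x v)].

Definition grid_point (T : finType) (N : nat) (s t : R)
    (g : {ffun T -> 'I_N.+2}) (v : T) : R :=
  Rplus s (Rdiv (Rmult (Rminus t s) (INR (nat_of_ord (g v)))) (INR N.+1)).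

(* Riemann (Jordan) sum of the indicator of Omega on the grid of mesh
   (t-s)/(N+1) in [s,t]^W:
     #(grid points of [s,t]^W lying in Omega) * mesh^|W|.
   (Grid functions are required to be 0 outside W, so that they are exactly
   the grid points of [s,t]^W.) *)
Definition jordan_sum (T : finType) (lt : rel T) (W : {set T}) (s t : R)
    (N : nat) : R :=
  Rmult
    (INR #|[set g : {ffun T -> 'I_N.+2} |
              [forall v in ~: W, g v == ord0] &&
              in_Omega lt W s t (grid_point s t g)]|)
    (pow (Rdiv (Rminus t s) (INR N.+1)) #|W|).

Definition is_Omega_volume (T : finType) (lt : rel T) (W : {set T})
    (s t vol : R) : Prop :=
  Un_cv (jordan_sum lt W s t) vol.

Definition is_poset_factorial (T : finType) (lt : rel T) (W : {set T})
    (f : R) : Prop :=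
  Rlt 0 f /\
  forall s t : R, Rlt s t ->
    is_Omega_volume lt W s t (Rdiv (pow (Rminus t s) #|W|) f).

Definition poset_factorial (T : finType) (lt : rel T) (W : {set T}) : R :=
  epsilon (inhabits R1) (is_poset_factorial lt W).

(* Planar rooted forests (decorated by A; take A = unit for undecorated)     *)

Inductive ptree (A : Type) : Type :=
  PNode : A -> seq (ptree A) -> ptree A.

Definition pforest (A : Type) := seq (ptree A).

(* Vertices are encoded by addresses: [:: i; j1; ...; jk] is the jk-th child
   of ... of the j1-th child of the i-th root (all indices 0-based, from the
   left).  [tverts t] lists addresses relative to the root of t (root = [::]). *)
Fixpoint tverts (A : Type) (t : ptree A) : seq (seq nat) :=
  match t with
  | PNode _ cs =>
      [::] :: (fix fv (i : nat) (l : seq (ptree A)) : seq (seq nat) :=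
                 match l with
                 | [::] => [::]
                 | c :: l' => [seq i :: p | p <- tverts c] ++ fv i.+1 l'
                 end) 0 cs
  end.

Fixpoint fverts_from (A : Type) (i : nat) (f : pforest A) : seq (seq nat) :=
  match f with
  | [::] => [::]
  | c :: f' => [seq i :: p | p <- tverts c] ++ fverts_from i.+1 f'
  end.

Definition fverts (A : Type) (f : pforest A) : seq (seq nat) := fverts_from 0 f.

Definition fvert (A : Type) (f : pforest A) : finType := 'I_(size (fverts f)).

Definition addr (A : Type) (f : pforest A) (v : fvert f) : seq nat :=
  nth [::] (fverts f) v.

(* v < w : v <> w and v lies on the path from a root to w
   (i.e. the address of v is a proper prefix of that of w). *)
Definition anc_lt (A : Type) (f : pforest A) : rel (fvert f) :=
  fun v w => (addr v != addr w) && prefix (addr v) (addr w).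

(* addr v = p ++ [:: a], addr w = p ++ [:: b] with a > b: for p = [::] both
   are roots with v to the right of w; otherwise they are children of the
   common vertex p with v to the right of w. *)
Definition right_of (av aw : seq nat) : bool :=
  [&& 0 < size av, size av == size aw,
      take (size av).-1 av == take (size aw).-1 aw
    & last 0 aw < last 0 av].

Definition relR (A : Type) (f : pforest A) : rel (fvert f) :=
  fun v w => anc_lt v w || right_of (addr v) (addr w).

Definition tclosure (T : finType) (r : rel T) : rel T :=
  fun v w => [exists u, r v u && connect r u w].

Definition ll (A : Type) (f : pforest A) : rel (fvert f) := tclosure (@relR A f).

Definition ll_downset (A : Type) (f : pforest A) (W : {set fvert f}) : bool :=
  [forall v in W, forall w, ll w v ==> (w \in W)].

(* Main.v *)
Require Import Defs.
From Stdlib Require Import Reals.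
From mathcomp Require Import all_boot.
From HB Require Import structures.
From Stdlib Require Import Lia Lra ClassicalEpsilon.
From mathcomp Require Import zify.
Set Implicit Arguments.
Unset Strict Implicit.
Unset Printing Implicit Defensive.


Definition dset (T : finType) (r : rel T) (W D : {set T}) : bool :=
  (D \subset W) && [forall v in D, forall w in W, r w v ==> (w \in D)].

Fixpoint Qn (T : finType) (r : rel T) (m : nat) (W : {set T}) : nat :=
  match m with
  | 0 => nat_of_bool (W == set0)
  | m'.+1 => \sum_(D : {set T} | dset r W D) Qn r m' (W :\: D)
  end.

Fixpoint An (T : finType) (r : rel T) (j : nat) (W : {set T}) : nat :=
  match j with
  | 0 => nat_of_bool (W == set0)
  | j'.+1 => \sum_(D : {set T} | dset r W D && (D != set0)) An r j' (W :\: D)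
  end.

Lemma dset0 (T : finType) (r : rel T) (W : {set T}) : dset r W set0.
Proof. by rewrite /dset sub0set; apply/forall_inP => v; rewrite inE. Qed.

Lemma dsetW (T : finType) (r : rel T) (W : {set T}) : dset r W W.
Proof. by rewrite /dset subxx; apply/forall_inP => v _; apply/forall_inP => w ->; rewrite implybT. Qed.


Lemma QA (T : finType) (r : rel T) (m : nat) (W : {set T}) :
  Qn r m W = \sum_(j < m.+1) An r j W * 'C(m, j).
Proof.
elim: m W => [|m IH] W.
  by rewrite big_ord1 /= muln1.
rewrite /= (bigD1 set0) ?dset0 //= setD0 IH.
rewrite [RHS]big_ord_recl bin0 muln1.
under [in RHS]eq_bigr => i _ do rewrite lift0 binS mulnDr.
rewrite big_split /= addnA.
congr (_ + _).
  rewrite [LHS]big_ord_recl bin0 muln1; congr (_ + _).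
  rewrite [RHS]big_ord_recr /= bin_small // muln0 addn0.
  by apply: eq_bigr => i _.
under [RHS]eq_bigr do rewrite big_distrl /=.
rewrite exchange_big /=.
by apply: eq_bigr => D _; rewrite IH.
Qed.

Lemma An_big (T : finType) (r : rel T) (j : nat) (W : {set T}) :
  #|W| < j -> An r j W = 0.
Proof.
elim: j W => [|j IH] W //= Hj.
apply: big1 => D /andP[/andP[sDW _] D0]; apply: IH.
rewrite cardsD (setIidPr sDW).
have : 0 < #|D| by rewrite card_gt0.
have : #|D| <= #|W| by apply: subset_leq_card.
lia.
Qed.

Lemma sum_singletons (T : finType) (P : pred {set T}) (F : {set T} -> nat) :
  \sum_(D | P D && (#|D| == 1)) F D = \sum_(x | P [set x]) F [set x].
Proof.
have inj : {in [set x | P [set x]] &, injective (fun x : T => [set x])}.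
  by move=> x y _ _ /set1_inj.
rewrite [RHS](eq_bigl (fun x => x \in [set x | P [set x]])); last by move=> x; rewrite inE.
rewrite -(big_imset (fun D => F D) inj) /=.
apply: eq_bigl => D; apply/idP/imsetP.
  by move=> /andP[PD /cards1P[x Dx]]; exists x; rewrite // inE -Dx.
by move=> [x]; rewrite inE => Px ->; rewrite Px cards1.
Qed.

Lemma An_top (T : finType) (r : rel T) (n : nat) (W : {set T}) :
  #|W| = n.+1 ->
  An r n.+1 W = \sum_(x | dset r W [set x]) An r n (W :\ x).
Proof.
move=> HW /=.
rewrite -(sum_singletons (fun D => dset r W D) (fun D => An r n (W :\: D))).
rewrite big_mkcond [RHS]big_mkcond; apply: eq_bigr => D _.
case dD: (dset r W D) => //=; move: dD => /andP[sDW _].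
have [D0|D0] := eqVneq D set0.
  by rewrite D0 cards0.
case: eqP => // H1 /=; apply: An_big.
rewrite cardsD (setIidPr sDW).
have : 0 < #|D| by rewrite card_gt0.
have : #|D| <= #|W| by apply: subset_leq_card.
lia.
Qed.

Lemma dsetP (T : finType) (r : rel T) (W D : {set T}) :
  reflect (D \subset W /\ forall v w, v \in D -> w \in W -> r w v -> w \in D)
          (dset r W D).
Proof.
apply: (iffP andP) => [[sDW /forall_inP H]|[sDW H]]; split => //.
  by move=> v w vD wW rwv; move/forall_inP: (H v vD) => /(_ w wW)/implyP; apply.
by apply/forall_inP => v vD; apply/forall_inP => w wW; apply/implyP; apply: H.
Qed.

Definition cc (T : finType) (r : rel T) (W : {set T}) : nat := An r #|W| W.

Lemma cc0 (T : finType) (r : rel T) : cc r set0 = 1.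
Proof. by rewrite /cc cards0 /= eqxx. Qed.

Lemma cc_rec (T : finType) (r : rel T) (W : {set T}) (n : nat) :
  #|W| = n.+1 -> cc r W = \sum_(x | dset r W [set x]) cc r (W :\ x).
Proof.
move=> HW; rewrite /cc HW An_top //; apply: eq_bigr => x /dsetP[sxW _].
have xW : x \in W by rewrite -sub1set.
by move: HW; rewrite (cardsD1 x W) xW add1n => -[->].
Qed.

Lemma cc_split (T : finType) (r : rel T) (n : nat) (W : {set T}) (j : nat) :
  #|W| = n -> j <= n ->
  \sum_(D | dset r W D && (#|D| == j)) cc r D * cc r (W :\: D) = cc r W.
Proof.
elim: n W j => [|n IH] W j HW Hj.
  have -> : j = 0 by lia.
  rewrite (big_pred1 set0); first by rewrite cc0 setD0 mul1n.
  by move=> D; rewrite /= cards_eq0 andbC; case: eqP => [->|_]; rewrite ?dset0.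
case: j Hj => [|j] Hj.
  rewrite (big_pred1 set0); first by rewrite cc0 setD0 mul1n.
  by move=> D; rewrite /= cards_eq0 andbC; case: eqP => [->|_]; rewrite ?dset0.
have E1 : \sum_(D | dset r W D && (#|D| == j.+1)) cc r D * cc r (W :\: D) =
   \sum_(D | dset r W D && (#|D| == j.+1))
       \sum_(x | dset r D [set x]) cc r (D :\ x) * cc r (W :\: D).
  apply: eq_bigr => D /andP[_ /eqP HD]; rewrite (cc_rec r HD) big_distrl //.
rewrite E1 {E1} (exchange_big_dep xpredT) /=; last by [].
rewrite (cc_rec r HW).
rewrite [LHS](bigID (fun x => dset r W [set x])) /=.
rewrite [X in _ + X = _]big1 ?addn0; last first.
  move=> x nx; apply: big1 => D /andP[/andP[dD _] dx]; exfalso; move/negP: nx; apply.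
  move/dsetP: dD => [sDW HD]; move/dsetP: dx => [sxD Hx].
  apply/dsetP; split; first exact: subset_trans sxD sDW.
  have xD : x \in D by rewrite -sub1set.
  move=> v w; rewrite inE => /eqP -> wW rwx.
  by apply: (Hx x) => //; [rewrite inE | apply: (HD x)].
apply: eq_bigr => x dx.
move/dsetP: (dx) => [sxW xmin].
have xW : x \in W by rewrite -sub1set.
have xmin' : forall w, w \in W -> r w x -> w = x.
  by move=> w wW rwx; apply/set1P; apply: (xmin x) => //; rewrite inE.
have HWx : #|W :\ x| = n by move: HW; rewrite (cardsD1 x W) xW add1n => -[].
rewrite -(IH (W :\ x) j HWx) //.
rewrite (reindex_onto (fun D' => x |: D') (fun D => D :\ x)) /=; last first.
  move=> D /andP[_ /dsetP[sxD _]]; apply: setD1K; by rewrite -sub1set.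
apply: eq_big => D'.
  apply/idP/idP.
    move=> /andP[/andP[/andP[/dsetP[sDW HD] /eqP cD] _] /eqP eD].
    have xD' : x \notin D' by rewrite -eD !inE eqxx.
    rewrite -eD setU1K //.
    move: cD; rewrite cardsU1 (negbTE xD') add1n => -[->]; rewrite eqxx andbT.
    apply/dsetP; split.
      apply/subsetP => y yD; rewrite !inE; apply/andP; split.
        by apply: contraNneq xD' => <-.
      by apply: (subsetP sDW); rewrite !inE yD orbT.
    move=> v w vD; rewrite !inE => /andP[wx wW] rwv.
    have : w \in x |: D' by apply: (HD v) => //; rewrite !inE vD orbT.
    by rewrite !inE (negbTE wx).
  move=> /andP[/dsetP[sDW HD] /eqP cD].
  have xD' : x \notin D'.
    by apply/negP => /(subsetP sDW); rewrite !inE eqxx.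
  rewrite setU1K // eqxx andbT cardsU1 xD' cD eqxx andbT.
  apply/andP; split.
    apply/dsetP; split.
      apply/subsetP => y; rewrite !inE => /orP[/eqP->//|yD].
      by move: (subsetP sDW y yD); rewrite !inE => /andP[].
    move=> v w; rewrite !inE => /orP[/eqP-> wW rwx|vD wW rwv].
      by rewrite (xmin' w wW rwx) eqxx.
    have [->|wx] := eqVneq w x; first by [].
    by rewrite (HD v) ?orbT // !inE wx.
  apply/dsetP; split; first by rewrite sub1set !inE eqxx.
  move=> v w; rewrite !inE => /eqP-> /orP[/eqP->//|wD rwx].
  have := subsetP sDW w wD; rewrite !inE => /andP[_ wW].
  by rewrite (xmin' w wW rwx) eqxx.
move=> /andP[_ /eqP eD]; rewrite eD; congr (_ * _); congr (cc r _).
by apply/setP => y; rewrite !inE; case: (y == x); case: (y \in D'); case: (y \in W).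
Qed.

Definition compat (T : finType) (r : rel T) (W : {set T}) (m : nat)
  (g : {ffun T -> 'I_m}) : bool :=
  [forall v in W, forall w in W, r v w ==> (g w <= g v)].

Definition Sset (T : finType) (r : rel T) (W : {set T}) (m : nat) :=
  [set g : {ffun T -> 'I_m.+1} | [forall v in ~: W, g v == ord0] && compat r W g].

Definition liftg (T : finType) (m : nat) (D : {set T}) (g : {ffun T -> 'I_m.+1})
  : {ffun T -> 'I_m.+2} :=
  [ffun v => if v \in D then ord_max else widen_ord (leqnSn m.+1) (g v)].

Lemma compatP (T : finType) (r : rel T) (W : {set T}) (m : nat) (g : {ffun T -> 'I_m}) :
  reflect (forall v w, v \in W -> w \in W -> r v w -> g w <= g v) (compat r W g).
Proof.
apply: (iffP forall_inP) => [H v w vW wW rvw|H v vW].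
  by move/forall_inP: (H v vW) => /(_ w wW)/implyP; apply.
by apply/forall_inP => w wW; apply/implyP; apply: H.
Qed.

Lemma SsetP (T : finType) (r : rel T) (W : {set T}) (m : nat) (g : {ffun T -> 'I_m.+1}) :
  reflect ((forall v, v \notin W -> g v = ord0) /\
           (forall v w, v \in W -> w \in W -> r v w -> g w <= g v))
          (g \in Sset r W m).
Proof.
rewrite inE; apply: (iffP andP) => [[/forall_inP H /compatP C]|[H C]]; split => //.
  by move=> v vW; apply/eqP; apply: H; rewrite inE.
  by apply/forall_inP => v; rewrite inE => /H ->.
by apply/compatP.
Qed.

Lemma ltmax (n : nat) (i : 'I_n.+1) : i != ord_max -> i < n.
Proof.
move=> H; have := ltn_ord i; rewrite ltnS leq_eqVlt => /orP[/eqP E|//].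
by case/eqP: H; apply: val_inj.
Qed.

Lemma Sset_card (T : finType) (r : rel T) (m : nat) (W : {set T}) :
  #|Sset r W m| = Qn r m.+1 W.
Proof.
elim: m W => [|m IH] W.
  have -> : Sset r W 0 = setT.
    apply/setP => g; rewrite in_setT; apply/SsetP; split.
      by move=> v _; rewrite [g v]ord1.
    by move=> v w _ _ _; rewrite [g v]ord1 [g w]ord1.
  rewrite cardsT card_ffun card_ord exp1n /=.
  rewrite (bigD1 W) ?dsetW //= setDv eqxx big1 //.
  move=> D /andP[/dsetP[sDW _] DW]; apply/eqP; rewrite eqb0 setD_eq0.
  by apply: contra DW => sWD; rewrite eq_sym eqEsubset sDW sWD.
pose top (g : {ffun T -> 'I_m.+2}) := [set v in W | g v == ord_max].
rewrite -sum1_card (partition_big top (dset r W)) /=; last first.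
  move=> g /SsetP[_ C]; apply/dsetP; split.
    by apply/subsetP => v; rewrite inE => /andP[].
  move=> v w; rewrite !inE => /andP[vW /eqP gv] wW rwv; rewrite wW /=.
  have := C w v wW vW rwv; rewrite gv /= => H.
  apply/eqP; apply: val_inj => /=; have := ltn_ord (g w); lia.
apply: eq_bigr => D dD.
move/dsetP: (dD) => [sDW HD].
rewrite sum1_card.
have inj : {in Sset r (W :\: D) m &, injective (@liftg T m D)}.
  move=> g1 g2 /SsetP[H1 _] /SsetP[H2 _] E; apply/ffunP => v.
  have := congr1 (fun g : {ffun T -> 'I_m.+2} => g v) E; rewrite !ffunE.
  case: ifP => vD.
    by rewrite H1 ?H2 // !inE vD.
  by move=> /(congr1 val) /= /val_inj.
rewrite -[RHS]/(Qn r m.+1 (W :\: D)) -IH -(card_in_imset inj).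
apply: eq_card => g; rewrite -[g \in (fun _ => _)]/((g \in Sset r W m.+1) && (top g == D)).
apply/idP/idP.
  move=> /andP[gS /eqP tg]; move/SsetP: gS => [H C].
  apply/imsetP; exists [ffun v => inord (g v) : 'I_m.+1].
    apply/SsetP; split.
      move=> v; rewrite !inE negb_and negbK ffunE => /orP[vD|vW].
        have : v \in top g by rewrite tg.
        rewrite inE => /andP[_ /eqP ->]; apply: val_inj => /=.
        by rewrite /inord /insubd insubF //= ltnn.
      by rewrite H //; apply: val_inj; rewrite /= inordK.
    move=> v w; rewrite !inE => /andP[vD vW] /andP[wD wW] rvw; rewrite !ffunE.
    have hv : g v < m.+1.
      apply: ltmax; have : v \notin top g by rewrite tg vD.
    by rewrite inE vW.
    have hw : g w < m.+1.
      apply: ltmax; have : w \notin top g by rewrite tg.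
      by rewrite inE wW.
    by rewrite !inordK //; apply: C.
  apply/ffunP => v; rewrite !ffunE.
  case: ifP => vD.
    have : v \in top g by rewrite tg.
    by rewrite inE => /andP[_ /eqP ->].
  apply: val_inj; rewrite /= inordK //.
  case vW: (v \in W).
    apply: ltmax; have : v \notin top g by rewrite tg vD.
    by rewrite inE vW.
  by rewrite H ?vW.
move=> /imsetP[g' /SsetP[H C] ->]; apply/andP; split.
  apply/SsetP; split.
    move=> v vW; rewrite ffunE.
    have vD : v \notin D by apply: contra vW; apply: (subsetP sDW).
    rewrite (negbTE vD) H; first by apply: val_inj.
    by rewrite !inE (negbTE vW) andbF.
  move=> v w vW wW rvw; rewrite !ffunE.
  case wD: (w \in D).
    by rewrite (HD w v wD vW rvw).
  case vD: (v \in D).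
    by apply: ltnW; exact: ltn_ord (g' w).
  by rewrite /=; apply: C => //; rewrite !inE ?vD ?wD ?vW ?wW.
apply/eqP/setP => v; rewrite !inE ffunE.
case vD: (v \in D).
  by rewrite eqxx andbT (subsetP sDW).
case: eqP; rewrite ?andbF // => /(congr1 val) /= E.
by have := ltn_ord (g' v); rewrite E ltnn.
Qed.

Lemma min_exists (T : finType) (r : rel T) :
  (forall x y z, r x y -> r y z -> r x z) -> (forall x, ~~ r x x) ->
  forall W : {set T}, W != set0 -> exists x, dset r W [set x].
Proof.
move=> rtr rirr W /set0Pn[x0 x0W].
pose pr x := #|[set y in W | r y x]|.
case: (arg_minnP pr x0W) => x xW xmin.
exists x; apply/dsetP; split; first by rewrite sub1set.
move=> v w; rewrite inE => /eqP -> wW rwx; exfalso.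
have : pr w < pr x.
  apply: proper_card; apply/properP; split.
    apply/subsetP => y; rewrite !inE => /andP[-> ryw] /=; exact: rtr ryw rwx.
  by exists w; rewrite !inE ?wW ?rwx ?(negbTE (rirr w)).
by rewrite ltnNge xmin.
Qed.

Lemma cc_pos (T : finType) (r : rel T) :
  (forall W : {set T}, W != set0 -> exists x, dset r W [set x]) ->
  forall W : {set T}, 0 < cc r W.
Proof.
move=> Hmin W; move Hn: #|W| => n; elim: n W Hn => [|n IH] W HW.
  by move/eqP: HW; rewrite cards_eq0 => /eqP ->; rewrite cc0.
rewrite (cc_rec r HW).
have W0 : W != set0 by rewrite -card_gt0 HW.
case: (Hmin W W0) => x dx.
rewrite (bigD1 x) //=; apply: leq_trans (leq_addr _ _).
move/dsetP: dx => [sxW _]; have xW : x \in W by rewrite -sub1set.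
by apply: IH; move: HW; rewrite (cardsD1 x W) xW add1n => -[].
Qed.

Fixpoint bef (a b : seq nat) : bool :=
  match a, b with
  | [::], [::] => false
  | [::], _ :: _ => true
  | _ :: _, [::] => false
  | x :: a', y :: b' => (y < x) || ((x == y) && bef a' b')
  end.

Lemma bef_irr (a : seq nat) : ~~ bef a a.
Proof. by elim: a => //= x a IH; rewrite ltnn eqxx. Qed.

Lemma bef_trans (a b c : seq nat) : bef a b -> bef b c -> bef a c.
Proof.
elim: a b c => [|x a IH] [|y b] [|z c] //=.
move=> /orP[yx|/andP[/eqP xy ab]] /orP[zy|/andP[/eqP yz bc]].
- by rewrite (ltn_trans zy yx).
- by rewrite -yz yx.
- by rewrite xy zy.
- by rewrite xy yz eqxx (IH _ _ ab bc) orbT.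
Qed.

Lemma bef_prefix (a b : seq nat) : a != b -> prefix a b -> bef a b.
Proof.
elim: a b => [|x a IH] [|y b] //= ab /andP[/eqP xy pab].
by rewrite xy eqxx IH ?orbT //; apply: contraNneq ab => ->; rewrite xy.
Qed.

Lemma bef_rcons (p : seq nat) (x y : nat) : y < x -> bef (rcons p x) (rcons p y).
Proof.
elim: p => [|z p IH] /= yx; first by rewrite yx.
by rewrite eqxx IH // orbT.
Qed.

Lemma bef_right (av aw : seq nat) : right_of av aw -> bef av aw.
Proof.
case/and4P => [sa /eqP ss /eqP tt ll].
case/lastP: av sa ss tt ll => [//|p x] _.
case/lastP: aw => [|q y]; first by rewrite size_rcons.
rewrite !size_rcons /= !last_rcons => -[spq].
rewrite -!cats1 !take_size_cat // => -> yx.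
by rewrite !cats1; apply: bef_rcons.
Qed.

Lemma connect_sub (T : finType) (e s : rel T) :
  (forall x y, e x y -> s x y) -> (forall x y z, s x y -> s y z -> s x z) ->
  forall x y, connect e x y -> (x = y) \/ s x y.
Proof.
move=> Hes Htr x y /connectP[p]; elim: p x => [|z p IH] x /=.
  by move=> _ ->; left.
move=> /andP[exz pz] ly; right; case: (IH z pz ly) => [<-|szy].
  exact: Hes.
exact: Htr (Hes _ _ exz) szy.
Qed.

Lemma ll_bef (A : Type) (f : pforest A) (v w : fvert f) :
  ll v w -> bef (addr v) (addr w).
Proof.
have HR : forall x y : fvert f, relR x y -> bef (addr x) (addr y).
  move=> x y /orP[/andP[ne pr]|ro]; [exact: bef_prefix | exact: bef_right].
move=> /existsP[u /andP[ru cu]].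
case: (connect_sub (s := fun x y : fvert f => bef (addr x) (addr y)) HR _ cu).
- by move=> x y z; apply: bef_trans.
- by move=> <-; apply: HR.
- by apply: bef_trans; apply: HR.
Qed.

Lemma ll_trans (A : Type) (f : pforest A) (x y z : fvert f) :
  ll x y -> ll y z -> ll x z.
Proof.
move=> /existsP[u1 /andP[r1 c1]] /existsP[u2 /andP[r2 c2]].
apply/existsP; exists u1; rewrite r1 /=.
apply: connect_trans c1 _; apply: connect_trans c2; exact: connect1.
Qed.

Lemma ll_irr (A : Type) (f : pforest A) (x : fvert f) : ~~ ll x x.
Proof. by apply/negP => /ll_bef; apply/negP; apply: bef_irr. Qed.

Lemma ll_min (A : Type) (f : pforest A) :
  forall W : {set fvert f}, W != set0 -> exists x, dset (@ll A f) W [set x].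
Proof. apply: min_exists; [exact: ll_trans | exact: ll_irr]. Qed.

From Coquelicot Require Import Coquelicot.
From mathcomp Require Import zify.

HB.instance Definition _ := Monoid.isComLaw.Build R R0 Rplus (fun a b c => esym (Rplus_assoc a b c)) Rplus_comm Rplus_0_l.
HB.instance Definition _ := Monoid.isComLaw.Build R R1 Rmult (fun a b c => esym (Rmult_assoc a b c)) Rmult_comm Rmult_1_l.

Lemma INR_sum (I : Type) (s : seq I) (P : pred I) (F : I -> nat) :
  INR (\sum_(i <- s | P i) F i) = \big[Rplus/R0]_(i <- s | P i) INR (F i).
Proof. by apply: (big_morph INR plus_INR). Qed.

Lemma INR_prod (I : Type) (s : seq I) (P : pred I) (F : I -> nat) :
  INR (\prod_(i <- s | P i) F i) = \big[Rmult/R1]_(i <- s | P i) INR (F i).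
Proof. by apply: (big_morph INR mult_INR). Qed.

Lemma lim_bigsum (K : nat) (u : nat -> nat -> R) (l : nat -> R) :
  (forall j, (j < K)%N -> is_lim_seq (u j) (l j)) ->
  is_lim_seq (fun N => \big[Rplus/R0]_(j < K) u j N) (\big[Rplus/R0]_(j < K) l j).
Proof.
elim: K => [|K IH] H.
  rewrite big_ord0; apply: (is_lim_seq_ext (fun=> R0)); last exact: is_lim_seq_const.
  by move=> N; rewrite big_ord0.
rewrite big_ord_recr /=.
apply: (is_lim_seq_ext _ _ _ _ (is_lim_seq_plus' _ _ _ _ (IH _) (H K (ltnSn K)))).
  by move=> N; rewrite big_ord_recr.
by move=> j Hj; apply: H; apply: ltnW.
Qed.

Lemma lim_bigprod (K : nat) (u : nat -> nat -> R) (l : nat -> R) :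
  (forall j, (j < K)%N -> is_lim_seq (u j) (l j)) ->
  is_lim_seq (fun N => \big[Rmult/R1]_(j < K) u j N) (\big[Rmult/R1]_(j < K) l j).
Proof.
elim: K => [|K IH] H.
  rewrite big_ord0; apply: (is_lim_seq_ext (fun=> R1)); last exact: is_lim_seq_const.
  by move=> N; rewrite big_ord0.
rewrite big_ord_recr /=.
apply: (is_lim_seq_ext _ _ _ _ (is_lim_seq_mult' _ _ _ _ (IH _) (H K (ltnSn K)))).
  by move=> N; rewrite big_ord_recr.
by move=> j Hj; apply: H; apply: ltnW.
Qed.

Lemma lim_inv : is_lim_seq (fun N => / INR N.+1) 0.
Proof.
have H := is_lim_seq_inv _ _ (proj1 (is_lim_seq_incr_1 INR p_infty) is_lim_seq_INR).
exact: (H (ltac:(discriminate))).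
Qed.

Lemma lim_factor (i : nat) : is_lim_seq (fun N => INR (N.+2 - i) / INR N.+1) 1.
Proof.
apply: (is_lim_seq_ext_loc (fun N => 1 + (1 - INR i) * / INR N.+1)).
  exists i => N HN.
  rewrite minus_INR; last by apply/leP; lia.
  rewrite !S_INR; field; have := pos_INR N; lra.
have := is_lim_seq_plus' _ _ _ _ (is_lim_seq_const 1)
         (is_lim_seq_mult' _ _ _ _ (is_lim_seq_const (1 - INR i)) lim_inv).
by rewrite Rmult_0_r Rplus_0_r.
Qed.

Lemma lim_invpow (k : nat) :
  is_lim_seq (fun N => (/ INR N.+1) ^ k) ((if k is 0 then 1 else 0) : R).
Proof.
elim: k => [|k IH] /=.
  exact: is_lim_seq_const.
have := is_lim_seq_mult' _ _ _ _ lim_inv IH.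
by rewrite Rmult_0_l.
Qed.

Lemma prod_div (j : nat) (a : nat -> R) (b : R) : b <> 0 ->
  \big[Rmult/R1]_(i < j) (a i / b) = (\big[Rmult/R1]_(i < j) a i) / b ^ j.
Proof.
move=> b0; elim: j => [|j IH]; first by rewrite !big_ord0 /=; field.
rewrite !big_ord_recr IH /=; field; split => //; exact: pow_nonzero.
Qed.

Lemma fact_fact (n : nat) : Factorial.fact n = n`!.
Proof. by elim: n => //= n ->; rewrite factS. Qed.

Lemma binom_eq (N j n : nat) : (j <= n)%N ->
  INR 'C(N.+2, j) / INR N.+1 ^ n =
  (\big[Rmult/R1]_(i < j) (INR (N.+2 - i) / INR N.+1)) * / INR (Factorial.fact j)
   * (/ INR N.+1) ^ (n - j).
Proof.
move=> Hjn.
have b0 : INR N.+1 <> 0 by apply: not_0_INR.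
have f0 : INR (Factorial.fact j) <> 0 by apply: INR_fact_neq_0.
rewrite (@prod_div j (fun i => INR (N.+2 - i)) (INR N.+1) b0).
have HP : \big[Rmult/R1]_(i < j) INR (N.+2 - i) = INR 'C(N.+2, j) * INR (Factorial.fact j).
  by rewrite -INR_prod -ffact_prod -bin_ffact mult_INR fact_fact.
rewrite HP.
have Hn : n = (j + (n - j))%N by lia.
rewrite {1}Hn pow_add -Rinv_pow //; field.
by split; [|split] => //; apply: pow_nonzero.
Qed.

Lemma lim_binom (j n : nat) : (j <= n)%N ->
  is_lim_seq (fun N => INR 'C(N.+2, j) / INR N.+1 ^ n)
             ((if j == n then / INR (Factorial.fact n) else 0) : R).
Proof.
move=> Hjn.
apply: (is_lim_seq_ext (fun N => (\big[Rmult/R1]_(i < j) (INR (N.+2 - i) / INR N.+1))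
   * / INR (Factorial.fact j) * (/ INR N.+1) ^ (n - j)%N)).
  by move=> N; rewrite binom_eq.
have Hp : is_lim_seq (fun N => \big[Rmult/R1]_(i < j) (INR (N.+2 - i) / INR N.+1)) 1.
  have := @lim_bigprod j (fun i N => INR (N.+2 - i) / INR N.+1) (fun=> 1)
            (fun i _ => @lim_factor i).
  by rewrite big1_eq.
have := is_lim_seq_mult' _ _ _ _
  (is_lim_seq_mult' _ _ _ _ Hp (is_lim_seq_const (/ INR (Factorial.fact j))))
  (@lim_invpow (n - j)%N).
case: eqP => [->|ne]; first by rewrite subnn /= Rmult_1_l Rmult_1_r.
case E: (n - j)%N => [|k]; first by exfalso; apply: ne; lia.
by rewrite Rmult_0_r.
Qed.

Lemma sum_widen (F : nat -> nat) (a b : nat) :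
  (forall j, (a <= j)%N -> F j = 0%N) -> (a <= b)%N ->
  (\sum_(j < a) F j = \sum_(j < b) F j)%N.
Proof.
move=> HF Hab; rewrite -!(big_mkord xpredT) (big_cat_nat (leq0n a) Hab) /=.
have -> : (\sum_(a <= j < b) F j = 0)%N.
  by rewrite big_nat_cond big1 // => j /andP[/andP[Hj _] _]; exact: HF.
by rewrite addn0.
Qed.

Lemma Qn_sum (T : finType) (r : rel T) (m : nat) (W : {set T}) :
  Qn r m W = (\sum_(j < #|W|.+1) An r j W * 'C(m, j))%N.
Proof.
rewrite QA (@sum_widen (fun j => An r j W * 'C(m, j))%N m.+1 (m.+1 + #|W|.+1)) ?leq_addr //; last first.
  by move=> j Hj; rewrite bin_small ?muln0.
rewrite [RHS](@sum_widen (fun j => An r j W * 'C(m, j))%N #|W|.+1 (m.+1 + #|W|.+1)) ?leq_addl //.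
by move=> j Hj; rewrite An_big ?mul0n.
Qed.

Lemma bigR_distrl (I : Type) (s : seq I) (P : pred I) (F : I -> R) (c : R) :
  \big[Rplus/R0]_(i <- s | P i) F i * c = \big[Rplus/R0]_(i <- s | P i) (F i * c).
Proof.
by apply: (big_morph (fun x => x * c) (fun x y => Rmult_plus_distr_r x y c) (Rmult_0_l c)).
Qed.

Lemma lim_jordan (T : finType) (r : rel T) (W : {set T}) (a : R) :
  is_lim_seq (fun N => INR (Qn r N.+2 W) * (a / INR N.+1) ^ #|W|)
             (INR (cc r W) / INR (Factorial.fact #|W|) * a ^ #|W|).
Proof.
set n := #|W|.
apply: (is_lim_seq_ext (fun N => \big[Rplus/R0]_(j < n.+1)
     (INR (An r j W) * a ^ n * (INR 'C(N.+2, j) / INR N.+1 ^ n)))).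
  move=> N; rewrite Qn_sum INR_sum bigR_distrl; apply: eq_bigr => j _.
  rewrite mult_INR; have b0 : INR N.+1 <> 0 by apply: not_0_INR.
  rewrite Rpow_mult_distr -Rinv_pow // /n; field; exact: pow_nonzero.
have := @lim_bigsum n.+1 (fun j N => INR (An r j W) * a ^ n * (INR 'C(N.+2, j) / INR N.+1 ^ n))
   (fun j => INR (An r j W) * a ^ n * ((if j == n then / INR (Factorial.fact n) else 0) : R))
   (fun j Hj => is_lim_seq_mult' _ _ _ _ (is_lim_seq_const _) (@lim_binom j n Hj)).
rewrite big_ord_recr /= eqxx big1 ?Rplus_0_l; last first.
  by move=> j _; rewrite /= (ltn_eqF (ltn_ord j)) Rmult_0_r.
by rewrite /cc -/n; congr is_lim_seq; congr Finite; field; apply: INR_fact_neq_0.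
Qed.

Lemma RlebP (a b : R) : reflect (a <= b) (Rleb a b).
Proof. by rewrite /Rleb; case: Rle_dec => H; constructor. Qed.

Lemma in_Omega_compat (T : finType) (lt : rel T) (W : {set T}) (s t : R) (N : nat)
  (g : {ffun T -> 'I_N.+2}) : s < t ->
  in_Omega lt W s t (grid_point s t g) = compat lt W g.
Proof.
move=> st; rewrite /in_Omega.
have b0 : 0 < INR N.+1 by apply: lt_0_INR; apply/ltP.
have k0 : 0 < (t - s) / INR N.+1 by apply: Rdiv_lt_0_compat; lra.
set k := (t - s) / INR N.+1 in k0.
have gpE v : grid_point s t g v = s + INR (g v) * k.
  by rewrite /grid_point /k; field; lra.
have -> : [forall v in W, Rleb s (grid_point s t g v) && Rleb (grid_point s t g v) t].
  apply/forall_inP => v _; apply/andP; split; apply/RlebP; rewrite gpE.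
    have := Rmult_le_pos _ _ (pos_INR (g v)) (Rlt_le _ _ k0); lra.
  have Hg : INR (g v) <= INR N.+1 by apply: le_INR; apply/leP; rewrite -ltnS.
  have := Rmult_le_compat_r _ _ _ (Rlt_le _ _ k0) Hg.
  have -> : INR N.+1 * k = t - s by rewrite /k; field; lra.
  lra.
rewrite andTb; apply: eq_forallb => v; congr (_ ==> _); apply: eq_forallb => w.
congr (_ ==> _); congr (_ ==> _); apply/RlebP/idP; rewrite !gpE => H.
  apply/leP; apply: INR_le; apply: (Rmult_le_reg_r _ _ _ k0); lra.
have : INR (g w) <= INR (g v) by apply: le_INR; apply/leP.
move/(Rmult_le_compat_r _ _ _ (Rlt_le _ _ k0)); lra.
Qed.

Lemma jordan_eq (T : finType) (lt : rel T) (W : {set T}) (s t : R) (N : nat) :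
  s < t ->
  jordan_sum lt W s t N = INR (Qn lt N.+2 W) * ((t - s) / INR N.+1) ^ #|W|.
Proof.
move=> st; rewrite /jordan_sum -Sset_card; congr (INR _ * _).
apply: eq_card => g; rewrite !inE in_Omega_compat //.
Qed.

Lemma pf_value (T : finType) (lt : rel T) (W : {set T}) :
  (forall W : {set T}, W != set0 -> exists x, dset lt W [set x]) ->
  poset_factorial lt W = INR (Factorial.fact #|W|) / INR (cc lt W).
Proof.
move=> Hmin.
have c0 : 0 < INR (cc lt W) by apply: lt_0_INR; apply/ltP; apply: cc_pos.
have f0 := INR_fact_lt_0 #|W|.
have Hex : is_poset_factorial lt W (INR (Factorial.fact #|W|) / INR (cc lt W)).
  split; first by apply: Rdiv_lt_0_compat.
  move=> s t st; apply/is_lim_seq_Reals.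
  apply: (is_lim_seq_ext _ _ _ (fun N => esym (jordan_eq lt W N st))).
  have := @lim_jordan T lt W (t - s); congr is_lim_seq; congr Finite.
  field; lra.
have := epsilon_spec (inhabits R1) _ (ex_intro _ _ Hex).
rewrite -/(poset_factorial lt W); set f := poset_factorial lt W.
move=> [fpos Hf]; case: Hex => _ H2.
have := UL_sequence _ _ _ (Hf 0 1 Rlt_0_1) (H2 0 1 Rlt_0_1).
rewrite Rminus_0_r pow1 /Rdiv !Rmult_1_l => E.
by rewrite -(Rinv_inv f) E Rinv_inv.
Qed.

Lemma sumf_big (g : nat -> R) (n : nat) :
  sum_f_R0 g n = \big[Rplus/R0]_(i < n.+1) g i.
Proof.
elim: n => [|n IH] /=; first by rewrite big_ord1.
by rewrite IH [in RHS]big_ord_recr.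
Qed.

Lemma step3 (A : Type) (f : pforest A) (h k : R) (j : nat) :
  (j <= #|[set: fvert f]|)%N ->
  \big[Rplus/R0]_(D : {set fvert f} | dset (@ll A f) [set: fvert f] D && (#|D| == j))
     Rmult (Rmult
       (Rdiv (poset_factorial (@ll A f) setT)
             (Rmult (poset_factorial (@ll A f) (~: D))
                    (poset_factorial (@ll A f) D)))
       (pow h #|~: D|))
       (pow k #|D|)
  = (Binomial.C #|[set: fvert f]| j * pow k j * pow h (#|[set: fvert f]| - j)%N)%R.
Proof.
set V := [set: fvert f]; set n := #|V| => Hj.
have ccp : forall W : {set fvert f}, (0 < INR (cc (@ll A f) W))%R.
  by move=> W; apply: lt_0_INR; apply/ltP; apply: cc_pos; apply: ll_min.
pose coef := (Binomial.C n j * pow k j * pow h (n - j)%N / INR (cc (@ll A f) V))%R.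
rewrite (eq_bigr (fun D => INR (cc (@ll A f) D * cc (@ll A f) (V :\: D)) * coef)%R); last first.
  move=> D /andP[_ /eqP cD].
  have cC : #|~: D| = (n - j)%N.
    by have := cardsC D; rewrite -cD /n cardsT; lia.
  rewrite !(@pf_value _ (@ll A f) _ (@ll_min A f)) cC cD setTD mult_INR /coef /Binomial.C -/n.
  have := ccp V; have := ccp D; have := ccp (~: D).
  have := INR_fact_lt_0 n; have := INR_fact_lt_0 j; have := INR_fact_lt_0 (n - j)%N.
  have -> : (n - j)%coq_nat = (n - j)%N by []. rewrite /n. move=> *; field; repeat split; lra.
rewrite -bigR_distrl -INR_sum (@cc_split _ (@ll A f) n V j) // /coef.
field; have := ccp V; lra.
Qed.

Unset Implicit Arguments.

Theorem mainTheorem8 (A : Type) (f : pforest A) (h k : R)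
    (hh : Rle 0 h) (hk : Rle 0 k) :
  pow (Rplus h k) (size (fverts f)) =
  \big[Rplus/R0]_(V2 : {set fvert f} | ll_downset V2)
     Rmult (Rmult
       (Rdiv (poset_factorial (@ll A f) setT)
             (Rmult (poset_factorial (@ll A f) (~: V2))
                    (poset_factorial (@ll A f) V2)))
       (pow h #|~: V2|))
       (pow k #|V2|).
Proof.
have Hn : size (fverts f) = #|[set: fvert f]| by rewrite cardsT card_ord.
rewrite Hn.
set n := #|[set: fvert f]|.
rewrite (eq_bigl (fun V2 => dset (@ll A f) [set: fvert f] V2)); last first.
  move=> V2; rewrite /ll_downset /dset subsetT /=.
  apply: eq_forallb => v; congr (_ ==> _); apply: eq_forallb => w.
  by rewrite in_setT.
rewrite (partition_big (fun D : {set fvert f} => (inord #|D| : 'I_n.+1)) xpredT) //.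
rewrite (eq_bigr (fun j : 'I_n.+1 => (Binomial.C n j * pow k j * pow h (n - j)%N)%R)); last first.
  move=> j _; rewrite -step3; last by rewrite -ltnS.
  apply: eq_bigl => D; congr andb.
  have : (#|D| <= n)%N by rewrite /n cardsT max_card.
  rewrite -ltnS => HD; apply/eqP/eqP => [<-|->]; first by rewrite inordK.
  by apply: val_inj; rewrite /= inordK.
rewrite Rplus_comm Binomial.binomial sumf_big.
by apply: eq_bigr.
Qed.
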